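(* Let $Q$ be an $n\times n$ real symmetric matrix, $\Delta_n := \{x \in \mathbb{R}^n : x \ge 0,\ \sum_{j} x_j = 1\}$, and $\nu(Q) := \min_{x\in\Delta_n} x^TQx$. Let $\ell \in \mathbb{R}$ be any lower bound on $\nu(Q)$, and define $M_j = \max_{i=1,\ldots,n} Q_{ij} - \ell$ for $j=1,\ldots,n$. Let $U_1,\ldots,U_n$ satisfy $U_j \ge M_j$ for all $j$. Consider the mixed integer linear program (MILP2) in variables $x, z \in \mathbb{R}^n$, $y \in \{0,1\}^n$, $\alpha \in \mathbb{R}$: \[ \min\ \alpha \quad \text{s.t.}\quad e_j^TQx \le \alpha + z_j\ (j=1,\ldots,n),\quad e^Tx = 1,\quad x_j \le y_j\ (j=1,\ldots,n),\quad z_j \le U_j(1-y_j)\ (j=1,\ldots,n),\quad x \ge 0,\ z \ge 0,\ y_j \in \{0,1\}\ (j=1,\ldots,n), \] where $e_j$ is the $j$-th unit vector and $e$ the all-ones vector. Then (MILP2) is an equivalent reformulation of the problem $\min\{x^TQx : x \in \Delta_n\}$; in particular, the optimal value of (MILP2) equals $\nu(Q)$. *)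

(* Defs.v *)
From HB Require Import structures.
From mathcomp Require Import all_boot all_order all_algebra.
From mathcomp Require Import classical_sets reals.
Set Implicit Arguments. Unset Strict Implicit. Unset Printing Implicit Defensive.
Import Order.TTheory GRing.Theory Num.Theory.
Local Open Scope ring_scope.
Local Open Scope classical_set_scope.

Definition simplex {R : realType} {n : nat} (x : 'cV[R]_n) : Prop :=
  (forall j, 0 <= x j 0) /\ \sum_(j < n) x j 0 = 1.

Definition quad {R : realType} {n : nat} (Q : 'M[R]_n) (x : 'cV[R]_n) : R :=
  (x^T *m Q *m x) 0 0.

(* nu(Q) = min_{x in Delta_n} x^T Q x, taken as the infimum (attained by compactness) *)
Definition nu {R : realType} {n : nat} (Q : 'M[R]_n) : R :=
  inf [set quad Q x | x in [set x : 'cV[R]_n | simplex x]].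

(* M_j = max_i Q_ij - l  (Q j j is only the neutral seed; it is one of the terms) *)
Definition Mj {R : realType} {n : nat} (Q : 'M[R]_n) (l : R) (j : 'I_n) : R :=
  \big[Num.max/Q j j]_(i < n) Q i j - l.

Definition milp2_feas {R : realType} {n : nat} (Q : 'M[R]_n) (U : 'I_n -> R)
  (x z y : 'cV[R]_n) (alpha : R) : Prop :=
  (forall j, (Q *m x) j 0 <= alpha + z j 0) /\
  (\sum_(j < n) x j 0 = 1) /\
  (forall j, x j 0 <= y j 0) /\
  (forall j, z j 0 <= U j * (1 - y j 0)) /\
  (forall j, 0 <= x j 0) /\
  (forall j, 0 <= z j 0) /\
  (forall j, y j 0 = 0 \/ y j 0 = 1).

(* Main.v *)
Require Import Defs.
From HB Require Import structures.
From mathcomp Require Import all_boot all_order all_algebra.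
From mathcomp Require Import all_classical all_reals all_analysis.
Import Order.TTheory GRing.Theory Num.Theory.
Import numFieldNormedType.Exports.
Local Open Scope ring_scope.
Local Open Scope classical_set_scope.
From mathcomp Require Import ring lra.

Lemma cont_sum (R : realType) (T : topologicalType) (I : Type) (r : seq I)
  (f : I -> T -> R) : (forall i, continuous (f i)) ->
  continuous (fun v => \sum_(i <- r) f i v).
Proof.
move=> fc; elim: r => [|a r IH].
  under eq_fun do rewrite big_nil. exact: cst_continuous.
under eq_fun do rewrite big_cons.
by move=> x; apply: continuousD; [exact: fc|exact: IH].
Qed.

Lemma attain (R : realType) (n : nat) (Q : 'M[R]_n) : (0 < n)%N ->
  exists x, simplex x /\ forall y, simplex y -> quad Q x <= quad Q y.
Proof.
move=> n0.
pose S := [set v : 'rV[R]_n | (forall j, 0 <= v ord0 j) /\ \sum_j v ord0 j = 1].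
pose g := fun v : 'rV[R]_n => \sum_k (\sum_i v ord0 i * Q i k) * v ord0 k.
have gE : forall v, quad Q v^T = g v.
  move=> v; rewrite /quad /g trmxK !mxE; apply: eq_bigr => k _.
  by rewrite !mxE; congr (_ * _); apply: eq_bigr => i _; rewrite mxE.
have S0 : S !=set0.
  pose j0 := Ordinal n0.
  exists (delta_mx 0 j0); split => [j|]; first by rewrite mxE ler0n.
  rewrite (bigD1 j0) //= big1 => [|k /negbTE nk]; first by rewrite !mxE !eqxx addr0.
  by rewrite mxE nk andbF.
have Scl : closed S.
  have -> : S = (\bigcap_(j in setT) [set v : 'rV[R]_n | 0 <= v ord0 j]) `&`
       ((fun v : 'rV[R]_n => \sum_j v ord0 j) @^-1` [set 1]).
    apply/seteqP; split => v /=.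
      by case=> h1 h2; split => // j _; exact: h1.
    by case=> h1 h2; split => // j; exact: h1.
  apply: closedI.
    apply: closed_bigI => j _.
    apply: (@preimage_closed _ _ (fun v : 'rV[R]_n => v ord0 j) [set x | 0 <= x]).
      by move=> v _; exact: coord_continuous.
    exact: closed_ge.
  apply: preimage_closed; last exact: closed_eq.
  move=> v _; apply: cont_sum => j; exact: coord_continuous.
have Scp : compact S.
  have H := @rV_compact R n (fun=> `[0, 1]%classic) (fun=> @segment_compact _ 0 1).
  apply: (subclosed_compact Scl H).
  move=> v [h1 h2] j /=; rewrite in_itv /= h1 /= -h2.
  rewrite (bigD1 j) //= lerDl; apply: sumr_ge0 => k _; exact: h1.
have gc : {within S, continuous g}.
  apply: continuous_subspaceT; apply: cont_sum => k.
  move=> v; apply: continuousM; last exact: coord_continuous.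
  apply: cont_sum => i; move=> w; apply: continuousM; first exact: coord_continuous.
  exact: cst_continuous.
have [c cS cmin] := EVT_min_rV S0 Scp gc.
move: cS; rewrite inE => -[c1 c2].
exists c^T; split.
  by split; [move=> j; rewrite mxE | under eq_bigr do rewrite mxE].
move=> y [y1 y2]; rewrite gE -(trmxK y) gE; apply: cmin; rewrite inE; split.
  by move=> j; rewrite mxE.
by under eq_bigr do rewrite mxE.
Qed.

Set Implicit Arguments. Unset Strict Implicit.
Lemma quadE (R : realType) n (Q : 'M[R]_n) x :
  quad Q x = \sum_k x k 0 * (Q *m x) k 0.
Proof. by rewrite /quad -mulmxA mxE; apply: eq_bigr => k _; rewrite mxE. Qed.

Lemma feas_quad (R : realType) n (Q : 'M[R]_n) U x z y alpha :
  milp2_feas Q U x z y alpha -> simplex x /\ quad Q x <= alpha.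
Proof.
move=> [h1 [h2 [h3 [h4 [h5 [h6 h7]]]]]]; split; first by [].
rewrite quadE -[alpha]mulr1 -h2 mulr_sumr.
apply: ler_sum => k _.
have [->|xk0] := eqVneq (x k 0) 0; first by rewrite !mul0r mulr0.
case: (h7 k) => yk.
  by move: (h3 k) (h5 k); rewrite yk => a b; case/eqP: xk0; apply/le_anti; rewrite a b.
have zk : z k 0 = 0 by apply/le_anti; rewrite h6 andbT; move: (h4 k); rewrite yk subrr mulr0.
rewrite mulrC; apply: ler_wpM2r; first exact: h5.
by move: (h1 k); rewrite zk addr0.
Qed.

Definition bil {R : realType} {n} (Q : 'M[R]_n) (u v : 'cV[R]_n) := (u^T *m Q *m v) 0 0.

Lemma bil_sym (R : realType) n (Q : 'M[R]_n) u v : Q^T = Q -> bil Q u v = bil Q v u.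
Proof.
move=> sQ; rewrite /bil.
have -> : (u^T *m Q *m v) 0 0 = ((u^T *m Q *m v)^T) 0 0.
  rewrite [RHS]mxE. done.
by rewrite !trmx_mul trmxK sQ mulmxA.
Qed.

Lemma bilDl (R : realType) n (Q : 'M[R]_n) u1 u2 v : bil Q (u1 + u2) v = bil Q u1 v + bil Q u2 v.
Proof. by rewrite /bil linearD /= !mulmxDl [LHS]mxE. Qed.
Lemma bilDr (R : realType) n (Q : 'M[R]_n) u v1 v2 : bil Q u (v1 + v2) = bil Q u v1 + bil Q u v2.
Proof. by rewrite /bil !mulmxDr mxE. Qed.
Lemma bilZl (R : realType) n (Q : 'M[R]_n) a u v : bil Q (a *: u) v = a * bil Q u v.
Proof. by rewrite /bil linearZ /= -!scalemxAl mxE. Qed.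
Lemma bilZr (R : realType) n (Q : 'M[R]_n) a u v : bil Q u (a *: v) = a * bil Q u v.
Proof. by rewrite /bil -!scalemxAr mxE. Qed.
Lemma bil_delta (R : realType) n (Q : 'M[R]_n) j v : bil Q (delta_mx j 0) v = (Q *m v) j 0.
Proof. by rewrite /bil trmx_delta -mulmxA -rowE mxE. Qed.


Lemma arith_aux (R : realType) (a q v u : R) :
  0 <= 2 * (a - q) + v -> v <= u -> u <= q - a -> 0 < q - a -> False.
Proof. move=> *; lra. Qed.

Lemma kkt (R : realType) n (Q : 'M[R]_n) x : Q^T = Q -> simplex x ->
  (forall y, simplex y -> quad Q x <= quad Q y) ->
  forall j, quad Q x <= (Q *m x) j 0.
Proof.
move=> sQ sx xmin j.
set q := quad Q x; set a : R := (Q *m x) j 0; pose e : 'cV[R]_n := delta_mx j 0.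
pose c : R := bil Q e e.
have esum : \sum_k e k 0 = 1.
  rewrite (bigD1 j) //= big1 => [|k /negbTE nk]; first by rewrite !mxE !eqxx addr0.
  by rewrite mxE nk.
have key : forall t, 0 <= t <= 1 -> 0 <= t * (2 * (a - q) + t * (q - 2 * a + c)).
  move=> t /andP[t0 t1].
  have sp : simplex ((1 - t) *: x + t *: e).
    split.
      move=> k; rewrite !mxE; apply: addr_ge0; apply: mulr_ge0 => //.
      - by rewrite subr_ge0.
      - exact: sx.1.
    have -> : \sum_k ((1 - t) *: x + t *: e) k 0 = \sum_k ((1 - t) * x k 0 + t * e k 0) by apply: eq_bigr => k _; rewrite !mxE.
    by rewrite big_split /= -!mulr_sumr sx.2 esum !mulr1 subrK.
  have : q <= bil Q ((1 - t) *: x + t *: e) ((1 - t) *: x + t *: e) := xmin _ sp.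
  rewrite !(bilDl, bilDr, bilZl, bilZr) bil_delta (@bil_sym _ _ Q x e sQ) bil_delta.
  rewrite (_ : bil Q x x = q) // -subr_ge0 => h.
  by apply: le_trans h _; rewrite le_eqVlt; apply/orP; left; apply/eqP; rewrite -/c -/a; ring.
rewrite leNgt; apply/negP => ltaq.
set D := q - a; set K := `|q - 2 * a + c|.
have D0 : 0 < D by rewrite /D subr_gt0.
have DK0 : 0 < D + K by apply: (lt_le_trans D0); rewrite lerDl normr_ge0.
pose t := D / (D + K).
have t0 : 0 < t by apply: divr_gt0.
have t1 : t <= 1 by rewrite /t ler_pdivrMr // mul1r lerDl normr_ge0.
have := key t; rewrite t1 ltW //= => /(_ isT).
rewrite pmulr_rge0 // => h.
have h2 : t * (q - 2 * a + c) <= t * K by apply: ler_wpM2l; [exact: ltW | exact: ler_norm].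
have h3 : t * K <= D.
  rewrite /t mulrAC ler_pdivrMr //; apply: ler_wpM2l; [exact: ltW | lra].
have H1 := @arith_aux R a q _ _ h. have H2 := H1 _ h2. have H3 := H2 h3. exact: H3.
Qed.

Lemma constr (R : realType) n (Q : 'M[R]_n) l U x : Q^T = Q ->
  (forall j, Mj Q l j <= U j) -> l <= quad Q x -> simplex x ->
  (forall y, simplex y -> quad Q x <= quad Q y) ->
  exists z y, milp2_feas Q U x z y (quad Q x).
Proof.
move=> sQ hU hl sx xmin; have kk := kkt sQ sx xmin.
set q := quad Q x.
have supp : forall j, q < (Q *m x) j 0 -> x j 0 = 0.
  move=> j hj.
  have S0 : \sum_k x k 0 * ((Q *m x) k 0 - q) = 0.
    under eq_bigr do rewrite mulrBr.
    by rewrite sumrB -quadE -/q -mulr_suml sx.2 mul1r subrr.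
  have nn : forall k : 'I_n, true -> 0 <= x k 0 * ((Q *m x) k 0 - q).
    by move=> k _; apply: mulr_ge0; [exact: sx.1 | rewrite subr_ge0 kk].
  have := @psumr_eq0P _ _ _ _ nn S0 j isT.
  move/eqP; rewrite mulf_eq0 => /orP[/eqP //|].
  by rewrite subr_eq0 => /eqP hh; move: hj; rewrite hh ltxx.
exists (\col_j (if (Q *m x) j 0 <= q then 0 else (Q *m x) j 0 - q)).
exists (\col_j (if (Q *m x) j 0 <= q then 1 else 0 : R)).
split; [|split; [|split; [|split; [|split; [|split]]]]].
- move=> j; rewrite !mxE; case: ifP => h; first by rewrite addr0.
  by rewrite addrC subrK.
- exact: sx.2.
- move=> j; rewrite !mxE; case: ifPn => h.
    rewrite -sx.2 (bigD1 j) //= lerDl; apply: sumr_ge0 => k _; exact: sx.1.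
  rewrite (supp j); first exact: lexx. by rewrite ltNge [X in ~~ (X <= _)]mxE.
- move=> j; rewrite !mxE; case: ifPn => h; first by rewrite subrr mulr0.
  rewrite subr0 mulr1; apply: le_trans (hU j); rewrite /Mj; apply: lerB => //.
  rewrite -[X in _ <= X]mulr1 -sx.2 mulr_sumr; apply: ler_sum => i _.
  apply: ler_wpM2r; first exact: sx.1.
  have -> : Q j i = Q^T i j by rewrite mxE.
  rewrite sQ. have := @le_bigmax _ _ _ (Q j j) (fun k => Q k j) i. exact.
- exact: sx.1.
- move=> j; rewrite !mxE; case: ifPn => // h; by move: (kk j); rewrite mxE subr_ge0.
- move=> j; rewrite !mxE; case: ifP => _; by [right | left].
Qed.

Lemma nu_le (R : realType) n (Q : 'M[R]_n) l :
  (forall x, simplex x -> l <= quad Q x) ->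
  forall y, simplex y -> nu Q <= quad Q y.
Proof.
move=> hl y sy; apply: ge_inf; last by exists y.
by exists l => _ [x sx <-]; exact: hl.
Qed.

Lemma nu_eq (R : realType) n (Q : 'M[R]_n) l x :
  (forall x, simplex x -> l <= quad Q x) -> simplex x ->
  (forall y, simplex y -> quad Q x <= quad Q y) -> nu Q = quad Q x.
Proof.
move=> hl sx xmin; apply/le_anti; rewrite (nu_le hl sx) /=.
apply: lb_le_inf; first by exists (quad Q x), x.
by move=> _ [y sy <-]; exact: xmin.
Qed.

Theorem proposition2 (R : realType) (n : nat) (Q : 'M[R]_n) (l : R)
  (U : 'I_n -> R) :
  (0 < n)%N -> Q^T = Q ->
  (forall x : 'cV[R]_n, simplex x -> l <= quad Q x) ->
  (forall j, Mj Q l j <= U j) ->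
  [/\ (* the optimal value of (MILP2) is attained and equals nu(Q) *)
      (exists x z y : 'cV[R]_n, milp2_feas Q U x z y (nu Q)),
      (forall (x z y : 'cV[R]_n) (alpha : R), milp2_feas Q U x z y alpha -> nu Q <= alpha) &
      (* equivalence of optimal solutions *)
      (forall x : 'cV[R]_n,
         (simplex x /\ quad Q x = nu Q) <->
         (exists z y : 'cV[R]_n, milp2_feas Q U x z y (nu Q)))].
Proof.
move=> n0 sQ hl hU.
have [xs [sxs xmin]] := @attain _ _ Q n0.
have nuE := nu_eq hl sxs xmin.
split.
- have [z [y h]] := constr sQ hU (hl _ sxs) sxs xmin.
  by exists xs, z, y; rewrite nuE.
- move=> x z y a h; have [sx qa] := feas_quad h; exact: le_trans (nu_le hl sx) qa.
- move=> x; split.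
    case=> sx qx.
    have xm : forall y, simplex y -> quad Q x <= quad Q y.
      by move=> y sy; rewrite qx; exact: nu_le hl y sy.
    have [z [y h]] := constr sQ hU (hl _ sx) sx xm.
    by exists z, y; rewrite -qx.
  case=> z [y h]; have [sx qa] := feas_quad h; split=> //.
  by apply/le_anti; rewrite qa (nu_le hl sx).
Qed.
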